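(* Let $1<\beta<\beta^*$, $L,L^*,\rho>0$, $\bar f\in\mathcal F(\beta^*,L^*,\rho)$ and $r>0$. Set $\gamma_\varepsilon=1/\log\varepsilon^{-2}$, $W_\varepsilon=\Big(\frac{L}{\varepsilon^2}\frac{(\beta+2)(2\beta+1)}{(2\pi)^{2\beta}(\beta-1)}\Big)^{1/(2\beta+1)}$, and define the filter $\lambda^*_k=1$ if $k\le\gamma_\varepsilon W_\varepsilon$ and $\lambda^*_k=\big[1-(k/W_\varepsilon)^{\beta-1}\big]_+$ if $k>\gamma_\varepsilon W_\varepsilon$. Then, as $\varepsilon\to0$, $$\sup_{f\in\mathcal F_{r,\beta,L}(\bar f)}R^\varepsilon[f,\lambda^*]\le(1+o(1))\,C(\beta,L)\,\varepsilon^{\frac{4\beta-4}{2\beta+1}},$$ with $C(\beta,L)=\frac13\Big(\frac{\beta-1}{2\pi(\beta+2)}\Big)^{\frac{2\beta-2}{2\beta+1}}\big(L(2\beta+1)\big)^{\frac3{2\beta+1}}$.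
   Context: For an even $1$-periodic locally square integrable $g$, $g_k=\sqrt2\int_{-1/2}^{1/2}\cos(2\pi kt)g(t)dt$ and $\|g^{(\beta)}\|^2=\sum_{k\ge1}(2\pi k)^{2\beta}g_k^2$. $R^\varepsilon[f,h]=\sum_{k\ge1}(2\pi k)^2[(1-h_k)^2f_k^2+\varepsilon^2h_k^2]$ for a sequence $h\in[0,1]^{\mathbb N}$. $\mathcal F_0(\rho)$: locally square integrable, even, $1$-periodic $f$ with $|\int_{-1/2}^{1/2}f(t)\cos(2\pi t)dt|\ge\rho$; $\mathcal F(\beta^*,L^*,\rho)=\{f\in\mathcal F_0(\rho):\|f^{(\beta^* )}\|\le L^*\}$. $\mathcal F_{r,\beta,L}(\bar f)=\{\bar f+v:\ v\text{ even, 1-periodic},\ \sum_kv_k^2\le r^2,\ \sum_k(2\pi k)^{2\beta}v_k^2\le L\}$. *)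

(* Defs.v *)
From HB Require Import structures.
From mathcomp Require Import all_boot all_order all_algebra.
From mathcomp Require Import all_classical all_reals all_analysis.
Set Implicit Arguments. Unset Strict Implicit. Unset Printing Implicit Defensive.
Import Order.TTheory GRing.Theory Num.Theory.
Import numFieldNormedType.Exports.
Local Open Scope classical_set_scope.
Local Open Scope ring_scope.

Section Defs.
Variable R : realType.

Definition even_fun (g : R -> R) := forall t, g (- t) = g t.
Definition periodic1 (g : R -> R) := forall t, g (t + 1) = g t.
Definition loc_sq_int (g : R -> R) :=
  measurable_fun setT g /\
  forall a b : R, (@lebesgue_measure R).-integrable `[a, b] (fun t => ((g t) ^+ 2)%:E).

Definition coef (g : R -> R) (k : nat) : R :=
  Num.sqrt 2 * Rintegral (@lebesgue_measure R) `[-(1/2), 1/2]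
                  (fun t => cos (2 * pi * k%:R * t) * g t).

(* ||g^(beta)||^2 = sum_{k>=1} (2 pi k)^(2 beta) g_k^2  (in extended reals) *)
Definition sob2 (beta : R) (g : R -> R) : \bar R :=
  (\sum_(1 <= k <oo) (((2 * pi * k%:R) `^ (2 * beta)) * (coef g k) ^+ 2)%:E)%E.

Definition l2sq (g : R -> R) : \bar R :=
  (\sum_(1 <= k <oo) ((coef g k) ^+ 2)%:E)%E.

Definition risk (eps : R) (f : R -> R) (h : nat -> R) : \bar R :=
  (\sum_(1 <= k <oo) ((2 * pi * k%:R) ^+ 2 *
      ((1 - h k) ^+ 2 * (coef f k) ^+ 2 + eps ^+ 2 * (h k) ^+ 2))%:E)%E.

Definition F0 (rho : R) (f : R -> R) :=
  [/\ loc_sq_int f, even_fun f, periodic1 f &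
      rho <= `| Rintegral (@lebesgue_measure R) `[-(1/2), 1/2]
                   (fun t => f t * cos (2 * pi * t)) | ].

Definition Fclass (betas Ls rho : R) (f : R -> R) :=
  F0 rho f /\ (sob2 betas f <= (Ls ^+ 2)%:E)%E.

Definition Frbl (r beta L : R) (fbar f : R -> R) :=
  exists v : R -> R, [/\ even_fun v, periodic1 v, loc_sq_int v &
    [/\ f = (fun t => fbar t + v t),
    (l2sq v <= (r ^+ 2)%:E)%E & (sob2 beta v <= L%:E)%E]].

Definition gamma_eps (eps : R) : R := 1 / ln (eps ^-2).

Definition W_eps (beta L eps : R) : R :=
  (L / eps ^+ 2 * ((beta + 2) * (2 * beta + 1) /
      ((2 * pi) `^ (2 * beta) * (beta - 1)))) `^ (1 / (2 * beta + 1)).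

Definition lam_star (beta L eps : R) (k : nat) : R :=
  if k%:R <= gamma_eps eps * W_eps beta L eps then 1
  else Num.max 0 (1 - (k%:R / W_eps beta L eps) `^ (beta - 1)).

Definition Cconst (beta L : R) : R :=
  1 / 3 * ((beta - 1) / (2 * pi * (beta + 2))) `^ ((2 * beta - 2) / (2 * beta + 1))
        * (L * (2 * beta + 1)) `^ (3 / (2 * beta + 1)).

End Defs.

(* Main.v *)
Require Import Defs.
From HB Require Import structures.
From mathcomp Require Import all_boot all_order all_algebra.
From mathcomp Require Import all_classical all_reals all_analysis.
From mathcomp Require Import measurable_realfun lebesgue_integral_differentiation.
From mathcomp Require Import ring lra.
Set Implicit Arguments. Unset Strict Implicit. Unset Printing Implicit Defensive.
Import Order.TTheory GRing.Theory Num.Theory.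
Import numFieldNormedType.Exports.
Local Open Scope classical_set_scope.
Local Open Scope ring_scope.
Ltac nzt := repeat (match goal with |- is_true (_ && _) => apply/andP; split end);
  try (apply: lt0r_neq0; lra).
Ltac pos := repeat first [ assumption | apply: sqr_ge0 | apply: mulr_ge0 | apply: addr_ge0 | apply: powR_ge0 ].
Section A.
Variable R : realType.
Implicit Types s t p a b : R.

Lemma ln_le_sub1 (x : R) : 0 < x -> ln x <= x - 1.
Proof.
move=> x0; have := @le_ln1Dx R (x - 1); rewrite addrCA subrr addr0; apply.
by rewrite ltrBrDl subrr.
Qed.

Lemma amgm s th : 0 < s -> 0 <= th <= 1 -> s `^ th <= th * s + (1 - th).
Proof.
move=> s0 /andP[th0 th1].
have m0 : 0 < th * s + (1 - th).
  have [->|thn0] := eqVneq th 0; first by rewrite mul0r add0r subr0.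
  by rewrite ltr_wpDr ?subr_ge0// mulr_gt0// lt_neqAle eq_sym thn0.
set m := th * s + (1 - th) in m0 *.
rewrite -(ler_ln (powR_gt0 _ s0) m0) ?posrE ?powR_gt0// ln_powR.
rewrite -subr_ge0.
have h1 := ln_le_sub1 (divr_gt0 s0 m0).
have h2 := @ln_le_sub1 (m^-1) ltac:(by rewrite invr_gt0).
rewrite ln_div ?posrE // in h1. rewrite lnV ?posrE// in h2.
have : th * (ln s - ln m) + (1 - th) * (- ln m) <= th * (s / m - 1) + (1 - th) * (m^-1 - 1).
  by rewrite lerD // ler_wpM2l // subr_ge0.
have -> : th * (s / m - 1) + (1 - th) * (m^-1 - 1) = (th * s + (1 - th)) / m - 1.
  by rewrite /m; field; rewrite gt_eqF.
rewrite /m divff ?gt_eqF // subrr => H.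
rewrite -oppr_le0; apply: le_trans H; rewrite le_eqVlt; apply/orP; left; apply/eqP; ring.
Qed.

End A.
Section B.
Variable R : realType.
Implicit Types s t p a b : R.

Lemma bern t p : 0 <= t -> 1 <= p -> 1 + p * (t - 1) <= t `^ p.
Proof.
move=> t0 p1; have p0 : 0 < p by apply: lt_le_trans p1.
rewrite le_eqVlt in t0; case/orP: t0 => [/eqP<-|t0].
  rewrite powR0 ?gt_eqF // sub0r mulrN1 subr_le0 //.
have s0 : 0 < t `^ p by apply: powR_gt0.
have := @amgm R (t `^ p) (p^-1) s0.
rewrite invr_ge0 (ltW p0) /= invr_le1 ?unitfE ?gt_eqF// p1 => /(_ isT).
rewrite -powRrM mulfV ?gt_eqF // (powRr1 (ltW t0)) => H.
have := ler_wpM2l (ltW p0) H.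
have -> : p * (p^-1 * t `^ p + (1 - p^-1)) = t `^ p + p - 1.
  by field; rewrite gt_eqF.
move=> H2; rewrite -subr_ge0; rewrite -subr_ge0 in H2.
have -> : t `^ p - (1 + p * (t - 1)) = t `^ p + p - 1 - p * t by ring.
exact: H2.
Qed.

Lemma tangent a b p : 0 <= a -> 0 < b -> 1 <= p ->
  b `^ p + p * b `^ (p - 1) * (a - b) <= a `^ p.
Proof.
move=> a0 b0 p1; have p0 : 0 < p by apply: lt_le_trans p1.
have ta : a = (a / b) * b by rewrite divfK ?gt_eqF.
have Hb := bern (divr_ge0 a0 (ltW b0)) p1.
rewrite [in leRHS]ta powRM ?divr_ge0 //; last exact: ltW.
have hb : b `^ p = b * b `^ (p - 1) by rewrite mulr_powRB1 //; exact: ltW.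
have bp0 : 0 <= b `^ p by apply: powR_ge0.
apply: le_trans (ler_wpM2r bp0 Hb).
rewrite le_eqVlt; apply/orP; left; apply/eqP.
rewrite hb; field; rewrite gt_eqF //.
exact: ltW.
Qed.

End B.
Section C.
Variable R : realType.

Lemma psum_lb (s : R) (M : nat) : 0 <= s ->
  M%:R `^ (s + 1) / (s + 1) <= \sum_(1 <= k < M.+1) (k%:R : R) `^ s.
Proof.
move=> s0; have p0 : 0 < s + 1 by rewrite ltr_wpDl.
have p1 : 1 <= s + 1 by rewrite lerDr.
elim: M => [|M IH].
  by rewrite big_geq // powR0 ?gt_eqF // mul0r.
rewrite big_nat_recr //=.
have T := @tangent R M%:R (M.+1)%:R (s + 1) (ler0n _ _) (ltr0Sn _ _) p1.
rewrite addrK (_ : M%:R - M.+1%:R = -1 :> R) in T; last by rewrite -natr1; ring.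
apply: le_trans (lerD IH (lexx _)).
rewrite ler_pdivrMr // mulrDl divfK ?gt_eqF //.
rewrite -subr_ge0; rewrite -subr_ge0 in T.
have -> : M%:R `^ (s + 1) + M.+1%:R `^ s * (s + 1) - M.+1%:R `^ (s + 1)
  = M%:R `^ (s + 1) - (M.+1%:R `^ (s + 1) + (s + 1) * M.+1%:R `^ s * -1) by ring.
exact: T.
Qed.

Lemma psum_ub (s : R) (M : nat) : 0 <= s ->
  \sum_(1 <= k < M.+1) (k%:R : R) `^ s <= (M.+1)%:R `^ (s + 1) / (s + 1).
Proof.
move=> s0; have p0 : 0 < s + 1 by rewrite ltr_wpDl.
have p1 : 1 <= s + 1 by rewrite lerDr.
elim: M => [|M IH].
  by rewrite big_geq // powR1 divr_ge0 // ltW.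
rewrite big_nat_recr //=.
have T := @tangent R M.+2%:R (M.+1)%:R (s + 1) (ler0n _ _) (ltr0Sn _ _) p1.
rewrite addrK (_ : M.+2%:R - M.+1%:R = 1 :> R) in T; last by rewrite -[M.+2]addn1 natrD; ring.
apply: le_trans (lerD IH (lexx _)) _.
rewrite ler_pdivlMr // mulrDl divfK ?gt_eqF //.
rewrite -subr_ge0; rewrite -subr_ge0 in T.
have -> : M.+2%:R `^ (s + 1) - (M.+1%:R `^ (s + 1) + M.+1%:R `^ s * (s + 1))
  = M.+2%:R `^ (s + 1) - (M.+1%:R `^ (s + 1) + (s + 1) * M.+1%:R `^ s * 1) by ring.
exact: T.
Qed.

End C.
Section D.
Variable R : realType.

Lemma pwD (x a b : R) : 0 < x -> x `^ a * x `^ b = x `^ (a + b).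
Proof. by move=> x0; rewrite powRD // (gt_eqF x0) implybT. Qed.

Lemma pwn (x : R) (n : nat) : 0 <= x -> x `^ n%:R = x ^+ n.
Proof. exact: powR_mulrn. Qed.

Lemma pwle (x y a : R) : 0 <= a -> 0 <= x -> x <= y -> x `^ a <= y `^ a.
Proof.
move=> a0 x0 xy; apply: (ge0_ler_powR a0); rewrite ?nnegrE //.
exact: le_trans xy.
Qed.

Lemma pwdiv (k W a : R) : 0 <= k -> 0 < W -> (k / W) `^ a = k `^ a * W `^ (- a).
Proof.
move=> k0 W0; rewrite powRM ?invr_ge0 ?(ltW W0) //.
by rewrite -powR_inv1 ?(ltW W0) // -powRrM mulN1r.
Qed.

Lemma up_bound (W q : R) : 0 < W -> 1 <= q -> 2 * q - 2 <= W ->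
  (W + 1) `^ q <= W `^ q + 2 * q * W `^ (q - 1).
Proof.
move=> W0 q1 Wq.
have T := @tangent R W (W + 1) q (ltW W0) (ltr_wpDl (ltW W0) ltr01) q1.
have ey : (W + 1) `^ q = (W + 1) * (W + 1) `^ (q - 1).
  by rewrite mulr_powRB1 // ?(lt_le_trans ltr01 q1) // addr_ge0 // ltW.
have ez : W `^ q = W * W `^ (q - 1).
  by rewrite mulr_powRB1 // ?(lt_le_trans ltr01 q1) // ltW.
rewrite ey ez; rewrite ey ez in T.
have y0 := powR_ge0 (W + 1) (q - 1).
have z0 := powR_ge0 W (q - 1).
set y := (W + 1) `^ (q - 1) in T y0 *.
set z := W `^ (q - 1) in T z0 *.
have Hy : y <= 2 * z.
  have H1 : (W + 1 - q) * y <= W * z.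
    by rewrite -subr_ge0; rewrite -subr_ge0 in T;
       (have -> : W * z - (W + 1 - q) * y = W * z - ((W + 1) * y + q * y * (W - (W + 1))) by ring).
  nra.
nra.
Qed.

End D.
Section E.
Variable R : realType.

Lemma var_sum (b W : R) (M : nat) : 1 < b -> 2 * (2 * b + 1) <= W ->
  M%:R <= W -> W < M%:R + 1 ->
  \sum_(1 <= k < M.+1) (k%:R : R) ^+ 2 * (1 - (k%:R / W) `^ (b - 1)) ^+ 2
   <= (1 / 3 - 2 / (b + 2) + 1 / (2 * b + 1)) * W ^+ 3 + 6 * W ^+ 2.
Proof.
move=> b1 HW MW WM.
have b0 : 0 < b by apply: lt_trans b1.
have W0 : 0 < W by apply: lt_le_trans HW; rewrite mulr_gt0 // addr_gt0 // mulr_gt0.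
set v := W `^ (1 - b).
have term : forall k : nat, (0 < k)%N ->
   (k%:R : R) ^+ 2 * (1 - (k%:R / W) `^ (b - 1)) ^+ 2
   = k%:R `^ 2 - 2 * v * k%:R `^ (b + 1) + v ^+ 2 * k%:R `^ (2 * b).
  move=> k k0; have kp : (0 : R) < k%:R by rewrite ltr0n.
  rewrite pwdiv ?ler0n // (_ : - (b - 1) = 1 - b); last by ring.
  rewrite -/v (pwn 2 (ler0n _ k)).
  set u := k%:R `^ (b - 1).
  have e1 : k%:R ^+ 2 * u = k%:R `^ (b + 1).
    by rewrite -(pwn 2 (ler0n _ k)) /u pwD //; congr (_ `^ _); ring.
  have e2 : k%:R ^+ 2 * u ^+ 2 = k%:R `^ (2 * b).
    by rewrite expr2 mulrA e1 /u pwD //; congr (_ `^ _); ring.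
  rewrite -e1 -e2; ring.
rewrite (eq_big_nat _ _ (fun k Hk => term k (proj1 (andP Hk)))).
rewrite big_split /= sumrB -!mulr_sumr.
set S2 := \sum_(1 <= i < M.+1) _.
set Sa := \sum_(1 <= i < M.+1) _.
set Sb := \sum_(1 <= i < M.+1) _.
have v0 : 0 < v by apply: powR_gt0.
have Mn : (0:R) <= M%:R := ler0n _ _.
have M1 : (M.+1%:R : R) = M%:R + 1 by rewrite -natr1.
have h2 : S2 <= (W + 1) ^+ 3 / 3.
  have H := @psum_ub R 2 M (ler0n _ 2).
  rewrite (_ : (2:R) + 1 = 3%:R) in H; last by lra.
  apply: le_trans H _; rewrite ler_pM2r ?invr_gt0 ?ltr0n // -!pwn ?addr_ge0 ?ler01 ?(ltW W0) //.
  apply: pwle => //; rewrite M1 ?addr_ge0 // lerD2r //.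
have ha : (W ^+ 3 - (b + 2) * W ^+ 2) / (b + 2) <= v * Sa.
  have H := @psum_lb R (b + 1) M ltac:(lra).
  have b2 : 0 < b + 2 by rewrite addr_gt0.
  rewrite (_ : b + 1 + 1 = b + 2) in H; last by ring.
  have W1 : 0 <= W - 1 by rewrite subr_ge0; apply: le_trans HW; nra.
  have H2 : (W - 1) `^ (b + 2) <= M%:R `^ (b + 2).
    by apply: pwle; lra.
  have T := @tangent R (W - 1) W (b + 2) W1 W0 ltac:(rewrite -subr_ge0; (have -> : b + 2 - 1 = b + 1 by ring); rewrite addr_ge0 // ltW).
  rewrite (_ : b + 2 - 1 = b + 1) in T; last by ring.
  have e3 : v * W `^ (b + 2) = W ^+ 3.
    by rewrite /v pwD // -(pwn 3 (ltW W0)); congr (_ `^ _); lra.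
  have e2 : v * W `^ (b + 1) = W ^+ 2.
    by rewrite /v pwD // -(pwn 2 (ltW W0)); congr (_ `^ _); lra.
  apply: (@le_trans _ _ (v * (M%:R `^ (b + 2) / (b + 2)))); last by rewrite ler_wpM2l // ltW.
  rewrite mulrA ler_pM2r ?invr_gt0 // -e3 -e2.
  have : v * (W `^ (b + 2) + (b + 2) * W `^ (b + 1) * (W - 1 - W)) <= v * M%:R `^ (b + 2).
    by rewrite ler_wpM2l ?(ltW v0) //; lra.
  apply: le_trans; rewrite le_eqVlt; apply/orP; left; apply/eqP; ring.
have hb : v ^+ 2 * Sb <= (W ^+ 3 + 2 * (2 * b + 1) * W ^+ 2) / (2 * b + 1).
  set q := 2 * b + 1.
  have q0 : 0 < q by rewrite /q addr_gt0 // mulr_gt0.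
  have q1 : 1 <= q by rewrite /q lerDr mulr_ge0 // ltW.
  have H := @psum_ub R (2 * b) M (mulr_ge0 (ler0n _ 2) (ltW b0)).
  have H2 : M.+1%:R `^ q <= (W + 1) `^ q.
    by apply: pwle; rewrite ?M1; lra.
  have U := @up_bound R W q W0 q1 ltac:(apply: le_trans HW; rewrite /q; nra).
  have e3 : v ^+ 2 * W `^ q = W ^+ 3.
    by rewrite expr2 -mulrA /v !pwD // -(pwn 3 (ltW W0)); congr (_ `^ _); rewrite /q; lra.
  have e2 : v ^+ 2 * W `^ (q - 1) = W ^+ 2.
    by rewrite expr2 -mulrA /v !pwD // -(pwn 2 (ltW W0)); congr (_ `^ _); rewrite /q; lra.
  apply: (@le_trans _ _ (v ^+ 2 * ((W + 1) `^ q / q))).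
    by rewrite ler_wpM2l ?exprn_ge0 ?(ltW v0) //; apply: le_trans H _; rewrite ler_pM2r ?invr_gt0.
  rewrite mulrA ler_pM2r ?invr_gt0 // -e3 -e2.
  have : v ^+ 2 * (W + 1) `^ q <= v ^+ 2 * (W `^ q + 2 * q * W `^ (q - 1)).
    by rewrite ler_wpM2l ?exprn_ge0 ?(ltW v0).
  move/le_trans; apply; rewrite le_eqVlt; apply/orP; left; apply/eqP; ring.
have b2 : 0 < b + 2 by rewrite addr_gt0.
have q0 : 0 < 2 * b + 1 by rewrite addr_gt0 // mulr_gt0.
have ha' : W ^+ 3 / (b + 2) - W ^+ 2 <= v * Sa.
  apply: le_trans ha; rewrite le_eqVlt; apply/orP; left; apply/eqP; field; nzt.
have hb' : v ^+ 2 * Sb <= W ^+ 3 / (2 * b + 1) + 2 * W ^+ 2.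
  apply: le_trans hb _; rewrite le_eqVlt; apply/orP; left; apply/eqP; field; nzt.
have W2 : 2 <= W by apply: le_trans HW; nra.
have key : (W + 1) ^+ 3 / 3 - 2 * (W ^+ 3 / (b + 2) - W ^+ 2) + (W ^+ 3 / (2 * b + 1) + 2 * W ^+ 2)
   <= (1 / 3 - 2 / (b + 2) + 1 / (2 * b + 1)) * W ^+ 3 + 6 * W ^+ 2.
  rewrite -subr_ge0.
  have -> : (1 / 3 - 2 / (b + 2) + 1 / (2 * b + 1)) * W ^+ 3 + 6 * W ^+ 2 -
     ((W + 1) ^+ 3 / 3 - 2 * (W ^+ 3 / (b + 2) - W ^+ 2) + (W ^+ 3 / (2 * b + 1) + 2 * W ^+ 2))
     = W ^+ 2 - W - 1 / 3.
    by field; nzt.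
  nra.
lra.
Qed.
End E.
Section F.
Variable R : realType.
Local Notation mu := (@lebesgue_measure R).

Lemma cos_meas (c : R) : measurable_fun setT (fun t : R => cos (c * t)).
Proof.
apply: continuous_measurable_fun => x.
apply: continuous_comp; last exact: continuous_cos.
by apply: cvgM; [exact: cvg_cst | exact: cvg_id].
Qed.

Lemma cos_int (g : R -> R) (c : R) : loc_sq_int g ->
  mu.-integrable `[-(1/2), 1/2] (EFin \o (fun t => cos (c * t) * g t)).
Proof.
move=> [mg ig].
have i1 : mu.-integrable `[-(1/2), 1/2]%classic (EFin \o (fun _ : R => (1:R))).
  apply: continuous_compact_integrable; first exact: segment_compact.
  by apply: continuous_subspaceT => x; exact: cvg_cst.
have i2 := integrableD _ i1 (ig (-(1/2)) (1/2)).
apply: le_integrable (i2 _) => //.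
- apply/measurable_EFinP; apply: measurable_funS (measurable_funM (cos_meas c) mg) => //.
- move=> x _ /=.
  rewrite lee_fin normrM.
  have hc : `|cos (c * x)| <= 1 by rewrite ler_norml cos_le1 cos_geN1.
  have hg : `|g x| <= 1 + g x ^+ 2.
    by rewrite ler_norml; apply/andP; split; nra.
  rewrite (ger0_norm (_ : 0 <= 1 + g x ^+ 2)); last by rewrite addr_ge0 // sqr_ge0.
  apply: le_trans hg; rewrite -[leRHS]mul1r; apply: ler_wpM2r => //.
Qed.

Lemma coefD (g h : R -> R) k : loc_sq_int g -> loc_sq_int h ->
  coef (fun t => g t + h t) k = coef g k + coef h k.
Proof.
move=> lg lh; rewrite /coef -mulrDr; congr (_ * _).
rewrite -RintegralD //; last by apply: cos_int.
- by apply: eq_Rintegral => t _; rewrite mulrDr.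
- by apply: cos_int.
Qed.

End F.
Section G.
Variable R : realType.
Local Open Scope ereal_scope.

Lemma partial_le (u : nat -> R) (N : nat) : (forall k, (1 <= k)%N -> (0 <= u k)%R) ->
  ((\sum_(1 <= k < N) u k)%R)%:E <= \sum_(1 <= k <oo) (u k)%:E.
Proof.
move=> u0; rewrite -sumEFin.
have := @nneseries_lim_ge R (fun k => (u k)%:E) xpredT 1 N.
by apply => n n1 _; rewrite lee_fin u0.
Qed.

Lemma series_le (u : nat -> R) (X : R) : (forall k, (1 <= k)%N -> (0 <= u k)%R) ->
  (forall N, (\sum_(1 <= k < N) u k <= X)%R) ->
  \sum_(1 <= k <oo) (u k)%:E <= X%:E.
Proof.
move=> u0 HN; apply: lime_le.
  by apply: (@is_cvg_nneseries R (fun k => (u k)%:E) xpredT 1) => n n1 _; rewrite lee_fin u0.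
by apply: nearW => N; rewrite sumEFin lee_fin.
Qed.

Lemma series_hyp (u : nat -> R) (X : R) : (forall k, (1 <= k)%N -> (0 <= u k)%R) ->
  \sum_(1 <= k <oo) (u k)%:E <= X%:E ->
  forall N, (\sum_(1 <= k < N) u k <= X)%R.
Proof.
move=> u0 H N; rewrite -lee_fin; apply: le_trans H; exact: partial_le.
Qed.

End G.
Section H.
Variable R : realType.

Lemma floor_ex (x : R) : 0 <= x -> exists M : nat, M%:R <= x /\ x < M%:R + 1.
Proof.
move=> x0; exists (Num.truncn x); have /andP[h1 h2] := Num.Theory.truncn_itv x0.
by split => //; rewrite natr1.
Qed.

Lemma trunc_sum (F : nat -> R) (M N : nat) :
  (forall k, 0 <= F k) -> (forall k, (M < k)%N -> F k = 0) ->
  \sum_(1 <= k < N) F k <= \sum_(1 <= k < M.+1) F k.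
Proof.
move=> F0 FM.
have [N1|N1] := leqP N 1.
  by rewrite big_geq // sumr_ge0.
have [NM|NM] := leqP N M.+1.
  rewrite [in leRHS](big_cat_nat _ (n := N)) //=; last exact: ltnW.
  by rewrite lerDl sumr_ge0.
rewrite (@big_cat_nat _ _ _ M.+1 1 N) //=; last exact: ltnW.
have -> : \sum_(M.+1 <= i < N) F i = 0.
  by rewrite big_nat_cond big1 // => k /andP[/andP[Mk _] _]; apply: FM.
by rewrite addr0.
Qed.

End H.
Section I.
Variable R : realType.

Lemma bias_fac (b W : R) (k : nat) : 0 < W -> 1 < b -> (1 <= k)%N ->
  (2 * pi * k%:R) ^+ 2 * (1 - Num.max 0 (1 - (k%:R / W) `^ (b - 1))) ^+ 2
  <= (2 * pi * W) `^ (2 - 2 * b) * (2 * pi * k%:R) `^ (2 * b).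
Proof.
move=> W0 b1 k1.
have kp : (0 : R) < k%:R by rewrite ltr0n.
have pi0 : (0:R) < pi := pi_gt0 R.
have pi0' : (0:R) <= pi := ltW pi0.
have pp : (0 : R) < 2 * pi by rewrite mulr_gt0 // pi_gt0.
have kW : 0 < k%:R / W by rewrite divr_gt0.
set y := (k%:R / W) `^ (b - 1).
have y0 : 0 <= y by apply: powR_ge0.
set u := 1 - Num.max 0 (1 - y).
have u0 : 0 <= u by rewrite /u subr_ge0 ge_max ler01 /= gerBl.
have uy : u <= y by rewrite /u lerBlDr addrC -lerBlDr le_max lexx orbT.
have ey : (2 * pi * k%:R) ^+ 2 * y ^+ 2 = (2 * pi * W) `^ (2 - 2 * b) * (2 * pi * k%:R) `^ (2 * b).
  rewrite [y ^+ 2]expr2 /y pwD // (_ : b - 1 + (b - 1) = 2 * b - 2); last by ring.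
  rewrite (_ : k%:R / W = (2 * pi * k%:R) / (2 * pi * W)); last by field; nzt.
  rewrite pwdiv ?mulr_ge0 ?(ltW pp) ?mulr_gt0 //.
  rewrite -(pwn 2 (mulr_ge0 (ltW pp) (ltW kp))) mulrA pwD ?mulr_gt0 //.
  rewrite (_ : 2%:R + (2 * b - 2) = 2 * b); last by rewrite (_ : 2%:R = 2 :> R) //; ring.
  rewrite (_ : - (2 * b - 2) = 2 - 2 * b); last by ring.
  by rewrite mulrC.
rewrite -ey; apply: ler_wpM2l; first exact: sqr_ge0.
set z := y in uy y0 *.
nra.
Qed.

End I.
Section J.
Variable R : realType.

Lemma pow_neg_mono (x y e : R) : 0 < x -> x <= y -> 0 < e -> y `^ (- e) <= x `^ (- e).
Proof.
move=> x0 xy e0; rewrite !powRN lef_pV2 ?posrE ?powR_gt0 //; last exact: lt_le_trans xy.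
by apply: pwle => //; [exact: ltW | exact: ltW].
Qed.

Lemma sq_split (a c eta : R) : 0 < eta ->
  (a + c) ^+ 2 <= (1 + eta) * c ^+ 2 + (1 + eta^-1) * a ^+ 2.
Proof.
move=> e0; rewrite -subr_ge0.
have -> : (1 + eta) * c ^+ 2 + (1 + eta^-1) * a ^+ 2 - (a + c) ^+ 2
   = (eta * c - a) ^+ 2 / eta by field; nzt.
by rewrite divr_ge0 ?sqr_ge0 // ltW.
Qed.

Lemma term_bound (b bs W g eps eta a c : R) (k : nat) :
  1 < b -> b < bs -> 0 < W -> 0 < g -> 0 < eta -> (1 <= k)%N ->
  (2 * pi * k%:R) ^+ 2 *
   ((1 - (if k%:R <= g * W then 1 else Num.max 0 (1 - (k%:R / W) `^ (b - 1)))) ^+ 2 * (a + c) ^+ 2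
    + eps ^+ 2 * (if k%:R <= g * W then 1 else Num.max 0 (1 - (k%:R / W) `^ (b - 1))) ^+ 2)
  <= (2 * pi * W) `^ (2 - 2 * b) * ((1 + eta) * ((2 * pi * k%:R) `^ (2 * b) * c ^+ 2)
       + (1 + eta^-1) * (2 * pi * (g * W)) `^ (2 * b - 2 * bs) * ((2 * pi * k%:R) `^ (2 * bs) * a ^+ 2))
   + eps ^+ 2 * (2 * pi) ^+ 2 * (k%:R ^+ 2 * Num.max 0 (1 - (k%:R / W) `^ (b - 1)) ^+ 2
       + (if k%:R <= g * W then k%:R ^+ 2 else 0)).
Proof.
move=> b1 bbs W0 g0 e0 k1.
have pi0 : (0:R) < pi := pi_gt0 R.
have pi0' : (0:R) <= pi := ltW pi0.
have pp : (0 : R) < 2 * pi by rewrite mulr_gt0.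
have kp : (0 : R) < k%:R by rewrite ltr0n.
have B0 : 0 <= (2 * pi * W) `^ (2 - 2 * b) by apply: powR_ge0.
have G0 : 0 <= (2 * pi * (g * W)) `^ (2 * b - 2 * bs) by apply: powR_ge0.
have P0 : 0 <= (2 * pi * k%:R) `^ (2 * b) by apply: powR_ge0.
have Q0 : 0 <= (2 * pi * k%:R) `^ (2 * bs) by apply: powR_ge0.
have e0' : 0 <= 1 + eta^-1 by rewrite addr_ge0 // invr_ge0 ltW.
have e0'' : 0 <= 1 + eta by rewrite addr_ge0 // ltW.
case: ifP => hk.
  rewrite subrr expr0n /= mul0r add0r expr1n mulr1.
  have -> : (2 * pi * k%:R) ^+ 2 * eps ^+ 2 = 0 + eps ^+ 2 * (2 * pi) ^+ 2 * (0 + k%:R ^+ 2) by ring.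
  apply: lerD.
    by pos.
  apply: ler_wpM2l; first by apply: mulr_ge0; apply: sqr_ge0.
  by apply: lerD => //; apply: mulr_ge0; apply: sqr_ge0.
have hk' : g * W < k%:R by rewrite ltNge hk.
set lam := Num.max 0 _.
rewrite addr0 mulrDr.
apply: lerD; last first.
  by rewrite le_eqVlt; apply/orP; left; apply/eqP; ring.
have H1 := bias_fac W0 b1 k1; rewrite -/lam in H1.
have H2 := sq_split a c e0.
have H3 : (2 * pi * k%:R) `^ (2 * b) <=
   (2 * pi * (g * W)) `^ (2 * b - 2 * bs) * (2 * pi * k%:R) `^ (2 * bs).
  have -> : (2 * pi * k%:R) `^ (2 * b) = (2 * pi * k%:R) `^ (2 * b - 2 * bs) * (2 * pi * k%:R) `^ (2 * bs).
    by rewrite pwD ?mulr_gt0 //; congr (_ `^ _); ring.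
  rewrite ler_wpM2r //.
  rewrite (_ : 2 * b - 2 * bs = - (2 * bs - 2 * b)); last by ring.
  apply: pow_neg_mono; rewrite ?mulr_gt0 ?ler_wpM2l ?(ltW pp) ?(ltW hk') //.
  by rewrite subr_gt0 ltr_pM2l.
rewrite [leLHS]mulrA.
apply: le_trans (ler_wpM2r (sqr_ge0 _) H1) _.
set B := (2 * pi * W) `^ (2 - 2 * b).
set P := (2 * pi * k%:R) `^ (2 * b).
set G := (2 * pi * (g * W)) `^ (2 * b - 2 * bs).
set Q := (2 * pi * k%:R) `^ (2 * bs).
have s1 : B * P * (a + c) ^+ 2 <= B * P * ((1 + eta) * c ^+ 2 + (1 + eta^-1) * a ^+ 2).
  by apply: ler_wpM2l => //; apply: mulr_ge0.
have s2 : P * a ^+ 2 <= G * (Q * a ^+ 2) by rewrite mulrA ler_wpM2r // sqr_ge0.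
have s3 : B * P * ((1 + eta) * c ^+ 2 + (1 + eta^-1) * a ^+ 2) <=
  B * ((1 + eta) * (P * c ^+ 2) + (1 + eta^-1) * G * (Q * a ^+ 2)).
  have -> : B * P * ((1 + eta) * c ^+ 2 + (1 + eta^-1) * a ^+ 2) =
     B * ((1 + eta) * (P * c ^+ 2) + (1 + eta^-1) * (P * a ^+ 2)) by ring.
  rewrite -[(1 + eta^-1) * G * _]mulrA.
  by apply: ler_wpM2l => //; apply: lerD => //; apply: ler_wpM2l.
exact: le_trans s1 s3.
Qed.

End J.
Section K.
Variable R : realType.

Lemma F1_sum (b W : R) (N : nat) : 1 < b -> 2 * (2 * b + 1) <= W ->
  \sum_(1 <= k < N) (k%:R : R) ^+ 2 * Num.max 0 (1 - (k%:R / W) `^ (b - 1)) ^+ 2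
  <= (1 / 3 - 2 / (b + 2) + 1 / (2 * b + 1)) * W ^+ 3 + 6 * W ^+ 2.
Proof.
move=> b1 HW.
have W0 : 0 < W by apply: lt_le_trans HW; rewrite mulr_gt0 // addr_gt0 // mulr_gt0 // (lt_trans ltr01 b1).
have [M [MW WM]] := floor_ex (ltW W0).
apply: (le_trans (@trunc_sum R _ M N _ _)).
- by move=> k; pos.
- move=> k Mk.
  have kW : W < k%:R by apply: lt_le_trans WM _; rewrite natr1 ler_nat.
  have y1 : 1 <= (k%:R / W) `^ (b - 1).
    have e1 : (1:R) = 1 `^ (b - 1) by rewrite powR1.
    rewrite [leLHS]e1; apply: pwle; [lra | lra |].
    by rewrite ler_pdivlMr // mul1r ltW.
  have -> : Num.max 0 (1 - (k%:R / W) `^ (b - 1)) = 0.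
    by apply/eqP; rewrite eq_le ge_max lexx /= subr_le0 y1 /= le_max lexx.
  by rewrite expr0n mulr0.
rewrite (eq_big_nat _ _ (F2 := fun k => (k%:R : R) ^+ 2 * (1 - (k%:R / W) `^ (b - 1)) ^+ 2)).
  exact: var_sum.
move=> k /andP[k1 kM].
have y1 : (k%:R / W) `^ (b - 1) <= 1.
  have e1 : (1:R) = 1 `^ (b - 1) by rewrite powR1.
  rewrite [leRHS]e1; apply: pwle; [lra | by rewrite divr_ge0 // ltW |].
  rewrite ler_pdivrMr // mul1r; apply: le_trans MW; by rewrite ler_nat -ltnS.
by congr (_ * _ ^+ 2); apply/eqP; rewrite eq_le ge_max subr_ge0 y1 /= lexx le_max lexx orbT.
Qed.

Lemma F2_sum (x : R) (N : nat) : 0 <= x ->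
  \sum_(1 <= k < N) (if (k%:R : R) <= x then (k%:R : R) ^+ 2 else 0) <= (x + 1) ^+ 3 / 3.
Proof.
move=> x0.
have [M [Mx xM]] := floor_ex x0.
apply: (le_trans (@trunc_sum R _ M N _ _)).
- by move=> k; case: ifP => // _; apply: sqr_ge0.
- move=> k Mk; case: ifP => // kx.
  have : x < k%:R by apply: lt_le_trans xM _; rewrite natr1 ler_nat.
  by rewrite ltNge kx.
rewrite (eq_big_nat _ _ (F2 := fun k => (k%:R : R) `^ 2)).
  have H := @psum_ub R 2 M (ler0n _ 2).
  rewrite (_ : (2:R) + 1 = 3%:R) in H; last by lra.
  apply: le_trans H _; rewrite ler_pM2r ?invr_gt0 ?ltr0n // -!pwn ?addr_ge0 ?ler01 //.
  by apply: pwle => //; rewrite -natr1 lerD2r.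
move=> k /andP[k1 kM].
have -> : (k%:R <= x) = true.
  by apply: le_trans Mx; rewrite ler_nat -ltnS.
by rewrite pwn.
Qed.

End K.
Section L.
Variable R : realType.

Lemma partial_bound (b bs W g eps eta Lv Lf : R) (a c : nat -> R) (N : nat) :
  1 < b -> b < bs -> 0 < g -> 0 < eta -> 2 * (2 * b + 1) <= W ->
  (forall N, \sum_(1 <= k < N) (2 * pi * k%:R) `^ (2 * b) * c k ^+ 2 <= Lv) ->
  (forall N, \sum_(1 <= k < N) (2 * pi * k%:R) `^ (2 * bs) * a k ^+ 2 <= Lf) ->
  \sum_(1 <= k < N) (2 * pi * k%:R) ^+ 2 *
   ((1 - (if k%:R <= g * W then 1 else Num.max 0 (1 - (k%:R / W) `^ (b - 1)))) ^+ 2 * (a k + c k) ^+ 2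
    + eps ^+ 2 * (if k%:R <= g * W then 1 else Num.max 0 (1 - (k%:R / W) `^ (b - 1))) ^+ 2)
  <= (2 * pi * W) `^ (2 - 2 * b) * ((1 + eta) * Lv + (1 + eta^-1) * (2 * pi * (g * W)) `^ (2 * b - 2 * bs) * Lf)
   + eps ^+ 2 * (2 * pi) ^+ 2 * (((1 / 3 - 2 / (b + 2) + 1 / (2 * b + 1)) * W ^+ 3 + 6 * W ^+ 2)
       + (g * W + 1) ^+ 3 / 3).
Proof.
move=> b1 bbs g0 e0 HW Hc Ha.
have W0 : 0 < W by apply: lt_le_trans HW; rewrite mulr_gt0 // addr_gt0 // mulr_gt0 // (lt_trans ltr01 b1).
apply: le_trans (ler_sum_nat (fun k Hk => term_bound eps (a k) (c k) b1 bbs W0 g0 e0 (proj1 (andP Hk)))) _.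
rewrite big_split /= -!mulr_sumr !big_split /= -!mulr_sumr.
have B0 : 0 <= (2 * pi * W) `^ (2 - 2 * b) by apply: powR_ge0.
have G0 : 0 <= (2 * pi * (g * W)) `^ (2 * b - 2 * bs) by apply: powR_ge0.
have e0' : 0 <= 1 + eta^-1 by rewrite addr_ge0 // invr_ge0 ltW.
have e0'' : 0 <= 1 + eta by rewrite addr_ge0 // ltW.
apply: lerD.
  apply: ler_wpM2l => //; apply: lerD; first exact: (ler_wpM2l e0'' (Hc N)).
  exact: (ler_wpM2l (mulr_ge0 e0' G0) (Ha N)).
apply: ler_wpM2l; first by pos.
apply: lerD; first exact: F1_sum.
by apply: F2_sum; apply: mulr_ge0; apply: ltW.
Qed.

End L.
Section M.
Variable R : realType.

Ltac ppos := repeat first [ assumption | apply: pi_gt0 | apply: mulr_gt0 | apply: divr_gt0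
   | apply: powR_gt0 | apply: exprn_gt0 | (rewrite invr_gt0) | lra ].

Lemma lnW_eq (b L eps : R) : 1 < b -> 0 < L -> 0 < eps ->
  ln (W_eps b L eps) = 1 / (2 * b + 1) * (ln L - 2 * ln eps + ln (b + 2) + ln (2 * b + 1)
      - 2 * b * (ln 2 + ln pi) - ln (b - 1)).
Proof.
move=> b1 L0 e0; rewrite /W_eps ln_powR; congr (_ * _).
rewrite !lnM ?posrE; try by ppos.
rewrite !lnV ?posrE; try by ppos.
rewrite !lnM ?posrE; try by ppos.
rewrite ln_powR lnM ?posrE; try by ppos.
Qed.

End M.

Section M2.
Variable R : realType.

Ltac ppos := repeat first [ assumption | apply: pi_gt0 | apply: mulr_gt0 | apply: divr_gt0
   | apply: powR_gt0 | apply: exprn_gt0 | (rewrite invr_gt0) | lra ].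

Lemma W_gt0 (b L eps : R) : 1 < b -> 0 < L -> 0 < eps -> 0 < W_eps b L eps.
Proof. move=> b1 L0 e0; rewrite /W_eps; apply: powR_gt0; ppos. Qed.

Lemma ident1 (b L eps : R) : 1 < b -> 0 < L -> 0 < eps ->
  eps ^+ 2 * (2 * pi) ^+ 2 * (W_eps b L eps) ^+ 3
  = (b + 2) * (2 * b + 1) / (b - 1) * ((2 * pi * W_eps b L eps) `^ (2 - 2 * b) * L).
Proof.
move=> b1 L0 e0; have W0 := W_gt0 b1 L0 e0.
have lW := lnW_eq b1 L0 e0.
set W := W_eps b L eps in W0 lW *.
apply: ln_inj; rewrite ?posrE; try by ppos.
rewrite !lnM ?posrE; try by ppos.
rewrite lnV ?posrE; try by ppos.
rewrite ln_powR !lnM ?posrE; try by ppos.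
rewrite lW; field; nzt.
Qed.

Lemma ident2 (b L eps : R) : 1 < b -> 0 < L -> 0 < eps ->
  Cconst b L * eps `^ ((4 * b - 4) / (2 * b + 1))
  = (2 * b + 1) / 3 * ((2 * pi * W_eps b L eps) `^ (2 - 2 * b) * L).
Proof.
move=> b1 L0 e0; have W0 := W_gt0 b1 L0 e0.
have lW := lnW_eq b1 L0 e0.
set W := W_eps b L eps in W0 lW *.
apply: ln_inj; rewrite ?posrE /Cconst; try by ppos.
rewrite !lnM ?posrE; try by ppos.
rewrite !lnV ?ln_powR ?posrE; try by ppos.
rewrite !lnM ?posrE; try by ppos.
rewrite ?lnV ?posrE; try by ppos.
rewrite !lnM ?posrE; try by ppos.
rewrite ?ln1 lW; field; nzt.
Qed.

End M2.
Section N.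
Variable R : realType.

Lemma final_arith (b delta d c1 B B0 L V W g G Ls tau h0 : R) :
  1 < b -> 0 < delta -> d = delta * (2 * b + 1) / 12 ->
  c1 = (b + 2) * (2 * b + 1) / (b - 1) -> B = B0 * L -> 0 <= B0 -> 0 < L -> 0 < W -> 0 < g ->
  V * W ^+ 3 = c1 * B -> 0 <= G -> G <= tau -> tau = d * L / ((1 + d^-1) * Ls ^+ 2) -> 0 < Ls ->
  6 * c1 / d <= W -> 1 / h0 <= W -> g <= h0 -> h0 <= 1 / 2 -> h0 <= 3 * d / (2 * c1) -> 0 < h0 ->
  B0 * ((1 + d) * L + (1 + d^-1) * G * Ls ^+ 2) +
  V * (((1 / 3 - 2 / (b + 2) + 1 / (2 * b + 1)) * W ^+ 3 + 6 * W ^+ 2) + (g * W + 1) ^+ 3 / 3)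
  <= (1 + delta) * ((2 * b + 1) / 3 * B).
Proof.
move=> b1 dl0 dE c1E BE B00 L0 W0 g0 VW G0 Gt tE Ls0 W1 W2 gh h1 h2 h00.
have d0 : 0 < d by rewrite dE; apply: divr_gt0 => //; apply: mulr_gt0 => //; lra.
have c10 : 0 < c1 by rewrite c1E; apply: divr_gt0; [apply: mulr_gt0|]; lra.
have B0' : 0 <= B by rewrite BE; apply: mulr_ge0 => //; exact: ltW.
have VE : V = c1 * B / W ^+ 3 by rewrite -VW mulfK // expf_neq0 // gt_eqF.
have T2 : B0 * ((1 + d^-1) * G * Ls ^+ 2) <= d * B.
  have e0 : 0 <= 1 + d^-1 by rewrite addr_ge0 // invr_ge0 ltW.
  apply: (@le_trans _ _ (B0 * ((1 + d^-1) * tau * Ls ^+ 2))).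
    apply: ler_wpM2l => //; apply: ler_wpM2r; first exact: sqr_ge0.
    exact: ler_wpM2l.
  rewrite tE BE le_eqVlt; apply/orP; left; apply/eqP; field; nzt.
have T3 : V * ((1 / 3 - 2 / (b + 2) + 1 / (2 * b + 1)) * W ^+ 3) = 2 * (b - 1) / 3 * B.
  rewrite VE c1E; field; nzt.
have T4 : V * (6 * W ^+ 2) <= d * B.
  have -> : V * (6 * W ^+ 2) = (6 * c1 / d / W) * (d * B) by rewrite VE; field; nzt.
  rewrite -[leRHS]mul1r; apply: ler_wpM2r; first by apply: mulr_ge0 => //; exact: ltW.
  by rewrite ler_pdivrMr // mul1r.
have T5 : V * ((g * W + 1) ^+ 3 / 3) <= d * B.
  have -> : V * ((g * W + 1) ^+ 3 / 3) = c1 * (g + 1 / W) ^+ 3 / 3 * B by rewrite VE; field; nzt.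
  apply: ler_wpM2r => //.
  have iW : 1 / W <= h0 by rewrite ler_pdivrMr // mulrC -ler_pdivrMr.
  set s := g + 1 / W.
  have s0 : 0 <= s by rewrite /s addr_ge0 ?divr_ge0 // ltW.
  have s1 : s <= 2 * h0 by rewrite /s; lra.
  have s3 : s ^+ 3 <= s.
    have sl1 : s <= 1 by lra.
    by rewrite exprS -[leRHS]mulr1 ler_wpM2l //; nra.
  have : c1 * s <= 3 * d.
    have : c1 * s <= c1 * (2 * h0) by apply: ler_wpM2l => //; exact: ltW.
    move/le_trans; apply.
    rewrite -ler_pdivlMl // mulrA.
    by apply: le_trans (ler_wpM2l _ h2) _; [lra | rewrite le_eqVlt; apply/orP; left; apply/eqP; field; nzt].
  move=> H; rewrite ler_pdivrMr //.
  apply: le_trans (ler_wpM2l (ltW c10) s3) _; lra.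
have T1 : B0 * ((1 + d) * L) = (1 + d) * B by rewrite BE; ring.
have -> : B0 * ((1 + d) * L + (1 + d^-1) * G * Ls ^+ 2) +
  V * (((1 / 3 - 2 / (b + 2) + 1 / (2 * b + 1)) * W ^+ 3 + 6 * W ^+ 2) + (g * W + 1) ^+ 3 / 3)
  = B0 * ((1 + d) * L) + B0 * ((1 + d^-1) * G * Ls ^+ 2) +
    V * ((1 / 3 - 2 / (b + 2) + 1 / (2 * b + 1)) * W ^+ 3) + V * (6 * W ^+ 2) +
    V * ((g * W + 1) ^+ 3 / 3) by ring.
rewrite T1 T3.
have -> : (1 + delta) * ((2 * b + 1) / 3 * B) = (1 + d) * B + d * B + 2 * (b - 1) / 3 * B + d * B + d * B.
  by rewrite dE; field.
by apply: lerD => //; apply: lerD => //; apply: lerD => //; apply: lerD.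
Qed.

End N.
Section Q.
Variable R : realType.

Lemma eps_facts (b L eps U0 : R) : 1 < b -> 0 < L -> 0 < eps -> 2 <= U0 ->
  eps <= U0 `^ (- (2 * b + 1)) ->
  [/\ U0 <= (eps ^-2) `^ (1 / (2 * (2 * b + 1))),
      W_eps b L eps = (L * ((b + 2) * (2 * b + 1) / ((2 * pi) `^ (2 * b) * (b - 1)))) `^ (1 / (2 * b + 1))
                       * ((eps ^-2) `^ (1 / (2 * (2 * b + 1)))) ^+ 2 &
      gamma_eps eps = 1 / (2 * (2 * b + 1) * ln ((eps ^-2) `^ (1 / (2 * (2 * b + 1)))))].
Proof.
move=> b1 L0 e0 U2 eU.
have m0 : 0 < 2 * b + 1 by lra.
have pi0 : (0:R) < pi := pi_gt0 R.
have y0 : 0 < eps ^-2 by rewrite invr_gt0 exprn_gt0.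
have ey : eps ^-2 = eps `^ (- 2%:R) by rewrite powR_invn // ltW.
split.
- rewrite ey -powRrM (_ : - 2%:R * (1 / (2 * (2 * b + 1))) = - (1 / (2 * b + 1))); last first.
    by field; nzt.
  have -> : U0 = (U0 `^ (- (2 * b + 1))) `^ (- (1 / (2 * b + 1))).
    rewrite -powRrM (_ : - (2 * b + 1) * - (1 / (2 * b + 1)) = 1); last by field; nzt.
    by rewrite powRr1 //; lra.
  apply: pow_neg_mono => //; apply: divr_gt0; lra.
- rewrite /W_eps (_ : L / eps ^+ 2 * ((b + 2) * (2 * b + 1) / ((2 * pi) `^ (2 * b) * (b - 1)))
     = (L * ((b + 2) * (2 * b + 1) / ((2 * pi) `^ (2 * b) * (b - 1)))) * eps ^-2); last by ring.
  rewrite powRM; last exact: ltW.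
    congr (_ * _); rewrite -(pwn 2 (powR_ge0 (eps ^-2) (1 / (2 * (2 * b + 1))))) -powRrM; congr (_ `^ _); field; nzt.
  apply: mulr_ge0; first exact: ltW.
  apply: divr_ge0; first by apply: mulr_ge0; lra.
  by apply: mulr_ge0; [apply: powR_ge0 | lra].
- rewrite /gamma_eps ln_powR; congr (_ / _); field; nzt.
Qed.

End Q.
Lemma maxl (R : realType) (x y : R) : x <= Num.max x y.
Proof. by rewrite le_max lexx. Qed.
Lemma maxr (R : realType) (x y : R) : y <= Num.max x y.
Proof. by rewrite le_max lexx orbT. Qed.
Lemma minl (R : realType) (x y : R) : Num.min x y <= x.
Proof. by rewrite ge_min lexx. Qed.
Lemma minr (R : realType) (x y : R) : Num.min x y <= y.
Proof. by rewrite ge_min lexx orbT. Qed.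

Unset Implicit Arguments.
Local Close Scope classical_set_scope.
Theorem mainTheorem12 (R : realType) (beta betas L Ls rho r : R) (fbar : R -> R) :
  1 < beta -> beta < betas -> 0 < L -> 0 < Ls -> 0 < rho -> 0 < r ->
  Fclass betas Ls rho fbar ->
  forall delta : R, 0 < delta ->
  exists eps0 : R, 0 < eps0 /\
    forall eps : R, 0 < eps -> eps < eps0 ->
    forall f : R -> R, Frbl r beta L fbar f ->
      (risk eps f (lam_star beta L eps) <=
        ((1 + delta) * Cconst beta L *
           eps `^ ((4 * beta - 4) / (2 * beta + 1)))%:E)%E.
Proof.
move=> b1 bbs L0 Ls0 rho0 r0 [[lsf _ _ _] sobf] delta dl0.
have pi0 : (0:R) < pi := pi_gt0 R.
pose c1 := (beta + 2) * (2 * beta + 1) / (beta - 1).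
pose d := delta * (2 * beta + 1) / 12.
pose h0 := Num.min (1 / 2) (3 * d / (2 * c1)).
pose e := 2 * betas - 2 * beta.
pose tau := d * L / ((1 + d^-1) * Ls ^+ 2).
pose T0 := tau `^ (- (1 / e)) / (2 * pi).
pose Wmin := Num.max (2 * (2 * beta + 1)) (Num.max (6 * c1 / d) (1 / h0)).
pose KM := (L * ((beta + 2) * (2 * beta + 1) / ((2 * pi) `^ (2 * beta) * (beta - 1)))) `^ (1 / (2 * beta + 1)).
pose U0 := Num.max 2 (Num.max (Wmin / KM) (Num.max (expR (1 / (2 * (2 * beta + 1) * h0)))
             (2 * (2 * beta + 1) * T0 / KM))).
have c10 : 0 < c1 by rewrite /c1; apply: divr_gt0; [apply: mulr_gt0|]; lra.
have d0 : 0 < d by rewrite /d; apply: divr_gt0 => //; apply: mulr_gt0 => //; lra.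
have h00 : 0 < h0.
  rewrite /h0 lt_min; apply/andP; split; first lra.
  by apply: divr_gt0; [apply: mulr_gt0|apply: mulr_gt0]; lra.
have ee0 : 0 < e by rewrite /e; lra.
have tau0 : 0 < tau.
  rewrite /tau; apply: divr_gt0; first by apply: mulr_gt0.
  by apply: mulr_gt0; [rewrite addr_gt0 // invr_gt0 | apply: exprn_gt0].
have KM0 : 0 < KM.
  rewrite /KM; apply: powR_gt0; apply: mulr_gt0 => //; apply: divr_gt0; [apply: mulr_gt0|apply: mulr_gt0]; try lra.
  by apply: powR_gt0; apply: mulr_gt0.
have U2 : 2 <= U0 by apply: maxl.
exists (U0 `^ (- (2 * beta + 1))); split; first by apply: powR_gt0; lra.
move=> eps e0 eeps f [v [_ _ lsv [-> _ sobv]]].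
have [Uu WE gE] := eps_facts b1 L0 e0 U2 (ltW eeps).
set u := (eps ^-2) `^ (1 / (2 * (2 * beta + 1))) in Uu WE gE.
rewrite -/KM in WE.
set W := W_eps beta L eps in WE *.
set g := gamma_eps eps in gE *.
have u2 : 2 <= u by apply: le_trans Uu.
have lnu0 : 0 < ln u by apply: ln_gt0; lra.
have lnuu : ln u <= u by apply: ltW; apply: ln_sublinear; lra.
have W0 : 0 < W by rewrite WE; apply: mulr_gt0 => //; apply: exprn_gt0; lra.
have m0 : 0 < 2 * beta + 1 by lra.
have g0 : 0 < g by rewrite gE; apply: divr_gt0; [lra | apply: mulr_gt0; lra].
have HW : Wmin <= W.
  have H1 : Wmin / KM <= u by apply: le_trans Uu; apply: le_trans (maxr _ _); apply: maxl.
  rewrite WE; apply: (@le_trans _ _ (KM * u)).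
    by rewrite -ler_pdivrMl // mulrC.
  by rewrite ler_wpM2l ?(ltW KM0) // expr2 -[leLHS]mul1r ler_wpM2r; lra.
have gh : g <= h0.
  have H1 : expR (1 / (2 * (2 * beta + 1) * h0)) <= u.
    apply: le_trans Uu; apply: le_trans (maxr _ _); apply: le_trans (maxr _ _); apply: maxl.
  have H2 : 1 / (2 * (2 * beta + 1) * h0) <= ln u.
    by rewrite -ler_expR lnK // posrE; lra.
  rewrite gE ler_pdivrMr; last by apply: mulr_gt0; lra.
  rewrite ler_pdivrMr in H2; last by apply: mulr_gt0; lra.
  lra.
have gW : T0 <= g * W.
  have H1 : 2 * (2 * beta + 1) * T0 / KM <= u.
    apply: le_trans Uu; apply: le_trans (maxr _ _); apply: le_trans (maxr _ _); apply: maxr.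
  rewrite gE WE.
  have -> : 1 / (2 * (2 * beta + 1) * ln u) * (KM * u ^+ 2) = (KM * u / (2 * (2 * beta + 1))) * (u / ln u).
    by field; apply/andP; split; apply: lt0r_neq0; lra.
  have ul : 1 <= u / ln u by rewrite ler_pdivlMr // mul1r.
  apply: (@le_trans _ _ (KM * u / (2 * (2 * beta + 1)))).
    by rewrite ler_pdivrMr // in H1; rewrite ler_pdivlMr //; lra.
  rewrite -[leLHS]mulr1; apply: ler_wpM2l => //.
  by apply: divr_ge0; [apply: mulr_ge0; lra | lra].
have Hc := series_hyp (fun k (_ : (1 <= k)%N) => mulr_ge0 (powR_ge0 _ _) (sqr_ge0 (coef v k))) sobv.
have Ha := series_hyp (fun k (_ : (1 <= k)%N) => mulr_ge0 (powR_ge0 _ _) (sqr_ge0 (coef fbar k))) sobf.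
rewrite /risk; apply: series_le.
  by move=> k _; pos.
move=> N.
rewrite (eq_big_nat _ _ (F2 := fun k => (2 * pi * k%:R) ^+ 2 * ((1 - lam_star beta L eps k) ^+ 2 *
    (coef fbar k + coef v k) ^+ 2 + eps ^+ 2 * (lam_star beta L eps k) ^+ 2))); last first.
  by move=> k _; rewrite coefD.
rewrite /lam_star -/W -/g.
have HW1 : 2 * (2 * beta + 1) <= W by apply: le_trans HW; apply: maxl.
apply: (le_trans (@partial_bound R beta betas W g eps d L (Ls ^+ 2) (coef fbar) (coef v) N b1 bbs g0 d0 HW1 Hc Ha)).
rewrite -[X in _ <= X]mulrA (ident2 b1 L0 e0) -/W.
have VW := ident1 b1 L0 e0; rewrite -/W in VW.
have HG : (2 * pi * (g * W)) `^ (2 * beta - 2 * betas) <= tau.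
  rewrite (_ : 2 * beta - 2 * betas = - e); last by rewrite /e; ring.
  have Hx : tau `^ (- (1 / e)) <= 2 * pi * (g * W).
    by rewrite -ler_pdivrMl ?mulr_gt0 // mulrC.
  apply: le_trans (pow_neg_mono (powR_gt0 _ tau0) Hx ee0) _.
  rewrite -powRrM (_ : - (1 / e) * - e = 1); last by field; nzt.
  by rewrite powRr1 // ltW.
apply: (final_arith (c1 := c1) (d := d) (tau := tau) (h0 := h0) b1 dl0 erefl erefl erefl _ L0 W0 g0 VW
   _ HG erefl Ls0 _ _ gh _ _ h00).
- exact: powR_ge0.
- exact: powR_ge0.
- by apply: le_trans HW; apply: le_trans (maxr _ _); apply: maxl.
- by apply: le_trans HW; apply: le_trans (maxr _ _); apply: maxr.
- exact: minl.
- exact: minr.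
Qed.
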